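(* Let $\mathcal{B}_a\subset\mathbb{R}^6$ be the set of all $(a,b,c,d,e,f)$ such that the Type $\mathcal{B}$ model $\mathcal{N}(a,b,c,d,e,f)$ has symmetric Ricci tensor $\rho_s=0$ but alternating Ricci tensor $\rho_a\neq0$. Define $\mathcal{V}_1(r,s,t):=(s,t,r,0,0,r)$ and $\mathcal{V}_2(u,v,w):=(1-2uw+vw^2,\ w(1-uw+vw^2),\ u-vw,\ -vw^2,\ v,\ u+vw)$, and let $\mathcal{D}_1$ be the range of $\mathcal{V}_1$ restricted to $r\neq0$ and $\mathcal{D}_2$ the range of $\mathcal{V}_2$ restricted to $u\neq0$. Then $\mathcal{B}_a=\mathcal{D}_1\cup\mathcal{D}_2$, and $\mathcal{V}_1$ (for $r\neq0$) and $\mathcal{V}_2$ (for $u\neq0$) define smoothly embedded $3$-dimensional submanifolds of $\mathbb{R}^6$ which intersect transversally along a smooth $2$-dimensional submanifold.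
   Context: For $(a,b,c,d,e,f)\in\mathbb{R}^6$, the Type $\mathcal{B}$ model $\mathcal{N}(a,b,c,d,e,f)$ is $(\mathbb{R}^+\times\mathbb{R},\nabla)$ where $\nabla$ is the torsion free connection with Christoffel symbols ($\nabla_{\partial_{x^i}}\partial_{x^j}=\Gamma_{ij}{}^k\partial_{x^k}$) $\Gamma_{11}{}^1=a/x^1$, $\Gamma_{11}{}^2=b/x^1$, $\Gamma_{12}{}^1=\Gamma_{21}{}^1=c/x^1$, $\Gamma_{12}{}^2=\Gamma_{21}{}^2=d/x^1$, $\Gamma_{22}{}^1=e/x^1$, $\Gamma_{22}{}^2=f/x^1$. Its Ricci tensor is $\rho=(x^1)^{-2}\begin{pmatrix}(a-d+1)d+b(f-c) & cd-be+f\\ c(d-1)-be & -c^2+fc+(a-d-1)e\end{pmatrix}$ (rows/columns indexed by $1,2$). The symmetric and alternating parts are $\rho_s(X,Y)=\frac12(\rho(X,Y)+\rho(Y,X))$ and $\rho_a(X,Y)=\frac12(\rho(X,Y)-\rho(Y,X))$. *)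

(* Defs.v *)
From HB Require Import structures.
From mathcomp Require Import all_boot all_order all_algebra.
From mathcomp Require Import all_classical all_reals all_analysis.
Set Implicit Arguments. Unset Strict Implicit. Unset Printing Implicit Defensive.
Import Order.TTheory GRing.Theory Num.Theory.
Import numFieldNormedType.Exports.
Local Open Scope classical_set_scope.
Local Open Scope ring_scope.

Section TypeB.
Variable R : realType.

Definition crd (n : nat) (p : 'rV[R]_n.+1) (i : nat) : R := p ord0 (inord i).

(* Ricci tensor of N(a,b,c,d,e,f) at a point with first coordinate x1 > 0
   (it does not depend on x2). *)
Definition ricci (p : 'rV[R]_6) (x1 : R) : 'M[R]_2 :=
  let a := crd p 0 in let b := crd p 1 in let c := crd p 2 in
  let d := crd p 3 in let e := crd p 4 in let f := crd p 5 in
  (x1 ^- 2) *: \matrix_(i < 2, j < 2)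
     (if (i == 0 :> nat) && (j == 0 :> nat) then (a - d + 1) * d + b * (f - c)
      else if (i == 0 :> nat) then c * d - b * e + f
      else if (j == 0 :> nat) then c * (d - 1) - b * e
      else - c ^+ 2 + f * c + (a - d - 1) * e).

Definition ricci_s (p : 'rV[R]_6) (x1 : R) : 'M[R]_2 :=
  2^-1 *: (ricci p x1 + (ricci p x1)^T).
Definition ricci_a (p : 'rV[R]_6) (x1 : R) : 'M[R]_2 :=
  2^-1 *: (ricci p x1 - (ricci p x1)^T).

Definition Ba : set 'rV[R]_6 :=
  [set p | (forall x1, 0 < x1 -> ricci_s p x1 = 0) /\
           (exists x1, 0 < x1 /\ ricci_a p x1 != 0)].

Definition row6 (l : seq R) : 'rV[R]_6 := \row_(i < 6) nth 0 l i.

Definition V1 (x : 'rV[R]_3) : 'rV[R]_6 :=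
  let r := crd x 0 in let s := crd x 1 in let t := crd x 2 in
  row6 [:: s; t; r; 0; 0; r].

Definition V2 (x : 'rV[R]_3) : 'rV[R]_6 :=
  let u := crd x 0 in let v := crd x 1 in let w := crd x 2 in
  row6 [:: 1 - 2 * u * w + v * w ^+ 2; w * (1 - u * w + v * w ^+ 2);
           u - v * w; - (v * w ^+ 2); v; u + v * w].

Definition U1 : set 'rV[R]_3 := [set x | crd x 0 != 0].
Definition U2 : set 'rV[R]_3 := [set x | crd x 0 != 0].

Definition D1 : set 'rV[R]_6 := V1 @` U1.
Definition D2 : set 'rV[R]_6 := V2 @` U2.

Fixpoint Cn_on (m k : nat) (n : nat) (U : set 'rV[R]_m) (f : 'rV[R]_m -> 'rV[R]_k)
  : Prop :=
  match n with
  | 0 => forall x, U x -> {for x, continuous f}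
  | n'.+1 => (forall x, U x -> differentiable f x) /\
             (forall v, Cn_on n' U ('D_v f))
  end.

Definition smooth_on (m k : nat) (U : set 'rV[R]_m) (f : 'rV[R]_m -> 'rV[R]_k) :=
  forall n, Cn_on n U f.

(* smooth embedding of an open set U of R^m into R^k: smooth, injective,
   immersive (Jacobian of full rank m), homeomorphism onto its image *)
Definition smooth_embedding (m k : nat) (U : set 'rV[R]_m)
  (phi : 'rV[R]_m -> 'rV[R]_k) : Prop :=
  [/\ open U, smooth_on U phi,
      (forall x y, U x -> U y -> phi x = phi y -> x = y),
      (forall x, U x -> \rank ('J phi x) = m) &
      (forall x, U x -> forall eps : R, 0 < eps -> exists2 delta : R, 0 < delta &
          forall y, U y -> `|phi y - phi x| < delta -> `|y - x| < eps)].

Definition submanifold (m k : nat) (S : set 'rV[R]_k) : Prop :=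
  forall p, S p -> exists (U : set 'rV[R]_m) (phi : 'rV[R]_m -> 'rV[R]_k)
    (O : set 'rV[R]_k),
    [/\ smooth_embedding U phi, open O, O p & phi @` U = S `&` O].

End TypeB.

(* Main.v *)
Require Import Defs.
From HB Require Import structures.
From mathcomp Require Import all_boot all_order all_algebra.
From mathcomp Require Import all_classical all_reals all_analysis.
From mathcomp Require Import ring lra.
Import Order.TTheory GRing.Theory Num.Theory.
Import numFieldNormedType.Exports.
Local Open Scope classical_set_scope.
Local Open Scope ring_scope.
Set Implicit Arguments. Unset Strict Implicit.

Section Pe.
Variable R : realType.
Variable m : nat.
Inductive pe := PC of R | PV of 'I_m | PA of pe & pe | PM of pe & pe.
Fixpoint ev (p : pe) (x : 'rV[R]_m) : R :=
  match p with PC c => c | PV i => x ord0 i | PA p q => ev p x + ev q x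
  | PM p q => ev p x * ev q x end.
Fixpoint dr (v : 'rV[R]_m) p := match p with PC _ => PC 0 | PV i => PC (v ord0 i)
  | PA p q => PA (dr v p) (dr v q) | PM p q => PA (PM p (dr v q)) (PM (dr v p) q) end.

Lemma ev_diff p x : differentiable (ev p) x.
Proof.
elim: p => [c|i|p IHp q IHq|p IHp q IHq] /=.
- exact: differentiable_cst.
- exact: differentiable_coord.
- exact: differentiableD.
- exact: differentiableM.
Qed.

Lemma ev_der p x v : 'D_v (ev p) x = ev (dr v p) x.
Proof.
elim: p => [c|i|p IHp q IHq|p IHp q IHq] /=.
- exact: derive_cst.
- have := @derive_mx R _ 1 m id x v (@derivable_id _ _ x v).
  rewrite derive_id => E. have := congr1 (fun M : 'rV[R]_m => M ord0 i) E. rewrite /= mxE => <-. by [].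
- change ('D_v (ev p + ev q) x = ev (dr v p) x + ev (dr v q) x).
  rewrite deriveD ?IHp ?IHq //; exact: diff_derivable (ev_diff _ _).
- change ('D_v (ev p * ev q) x = ev p x * ev (dr v q) x + ev (dr v p) x * ev q x).
  have H := @deriveM R _ (ev p) (ev q) x v (diff_derivable (ev_diff _ _)) (diff_derivable (ev_diff _ _)).
  rewrite [LHS]H IHp IHq.
  by congr (_ + _); apply: mulrC.
Qed.

Variable k : nat.
Definition vev (P : 'I_k -> pe) (x : 'rV[R]_m) : 'rV[R]_k := \row_j ev (P j) x.

Lemma vev_sum P : vev P = fun x => \sum_(j < k) (ev (P j) x *: delta_mx 0 j).
Proof. apply: funext => x; rewrite [LHS]row_sum_delta; apply: eq_bigr => j _; by rewrite mxE. Qed.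

Lemma vev_diff P x : differentiable (vev P) x.
Proof.
rewrite vev_sum.
have -> : (fun x => \sum_(j < k) (ev (P j) x *: delta_mx 0 j)) =
   \sum_(j < k) (fun x => ev (P j) x *: (delta_mx 0 j : 'rV[R]_k)).
  by apply: funext => y; rewrite fct_sumE.  
apply: differentiable_sum => j; exact: differentiableZl (ev_diff _ _).
Qed.

Lemma vev_der P x v : 'D_v (vev P) x = vev (fun j => dr v (P j)) x.
Proof.
rewrite derive_mx; last exact: diff_derivable (vev_diff _ _).
apply/matrixP => i j; rewrite !mxE.
have -> : (fun t => vev P t i j) = ev (P j) by apply: funext => t; rewrite mxE.
exact: ev_der.
Qed.

Lemma vev_Cn n (U : set 'rV[R]_m) P : Cn_on n U (vev P).
Proof.
elim: n P => [|n IH] P /=.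
  by move=> x _; apply: differentiable_continuous; exact: vev_diff.
split; first by move=> x _; exact: vev_diff.
move=> v; have -> : 'D_v (vev P) = vev (fun j => dr v (P j)).
  by apply: funext => x; exact: vev_der.
exact: IH.
Qed.

Lemma vev_smooth (U : set 'rV[R]_m) P : smooth_on U (vev P).
Proof. by move=> n; exact: vev_Cn. Qed.

Lemma vev_J P x i j : 'J (vev P) x i j = ev (dr (delta_mx 0 i) (P j)) x.
Proof.
rewrite /jacobian /lin1_mx mxE -deriveE; last exact: vev_diff.
by rewrite vev_der mxE.
Qed.
End Pe.

Section Concrete.
Variable R : realType.
Local Notation pe3 := (pe R 3).
Definition pu : pe3 := PV _ (inord 0).
Definition pv : pe3 := PV _ (inord 1).
Definition pw : pe3 := PV _ (inord 2).
Definition P1 (j : 'I_6) : pe3 :=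
  nth (PC _ 0) [:: pv; pw; pu; PC _ 0; PC _ 0; pu] j.
Definition P2 (j : 'I_6) : pe3 :=
  nth (PC _ 0) [:: PA (PA (PC _ 1) (PM (PC _ (-2)) (PM pu pw))) (PM pv (PM pw pw));
                  PM pw (PA (PA (PC _ 1) (PM (PC _ (-1)) (PM pu pw))) (PM pv (PM pw pw)));
                  PA pu (PM (PC _ (-1)) (PM pv pw));
                  PM (PC _ (-1)) (PM pv (PM pw pw));
                  pv;
                  PA pu (PM pv pw)] j.

Lemma V1E : @V1 R = vev P1.
Proof.
apply: funext => x; apply/rowP => j; rewrite !mxE.
by case: j => [[|[|[|[|[|[|?]]]]]] ?].
Qed.

Lemma V2E : @V2 R = vev P2.
Proof.
apply: funext => x; apply/rowP => j; rewrite !mxE.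
case: j => [[|[|[|[|[|[|?]]]]]] ?] //=; rewrite /crd; ring.
Qed.
End Concrete.

Lemma ordE n (i : 'I_n.+1) k : (k <= n)%N -> (i == inord k) = (val i == k).
Proof. by move=> kn; rewrite -val_eqE /= inordK. Qed.

Lemma ordE2 n (i : 'I_n.+1) k : (k <= n)%N -> (inord k == i) = (k == val i).
Proof. by move=> kn; rewrite eq_sym ordE // eq_sym. Qed.

Section Jac.
Variable R : realType.
Definition mxl m n (l : seq (seq R)) : 'M[R]_(m,n) := \matrix_(i,j) nth 0 (nth [::] l i) j.

Definition M1 : 'M[R]_(3,6) := mxl 3 6 [:: [:: 0;0;1;0;0;1]; [::1;0;0;0;0;0]; [::0;1;0;0;0;0]].

Lemma J1E x : 'J (@V1 R) x = M1.
Proof.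
rewrite V1E; apply/matrixP => i j; rewrite vev_J !mxE.
case: i => [[|[|[|?]]] ?] //; case: j => [[|[|[|[|[|[|?]]]]]] ?] //=;
 rewrite /pu /pv /pw /= !mxE ?ordE2 //=.
Qed.

Definition M2 (u v w : R) : 'M[R]_(3,6) := mxl 3 6
  [:: [:: -2*w; -(w^+2); 1; 0; 0; 1];
      [:: w^+2; w^+3; -w; -(w^+2); 1; w];
      [:: -2*u+2*v*w; 1-2*u*w+3*v*w^+2; -v; -2*v*w; 0; v]].

Lemma J2E y : 'J (@V2 R) y = M2 (crd y 0) (crd y 1) (crd y 2).
Proof.
rewrite V2E; apply/matrixP => i j; rewrite vev_J !mxE.
case: i => [[|[|[|?]]] ?] //; case: j => [[|[|[|[|[|[|?]]]]]] ?] //=;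
 rewrite /pu /pv /pw /= !mxE ?ordE2 //= /crd; ring.
Qed.

Lemma rank_rinv m n (A : 'M[R]_(m,n)) (B : 'M[R]_(n,m)) : A *m B = 1%:M -> \rank A = m.
Proof.
move=> AB; apply/eqP; rewrite eqn_leq rank_leq_row /=.
by rewrite -{1}(mxrank1 R m) -AB; exact: mxrankM_maxl.
Qed.

Lemma rank_M1 : \rank M1 = 3%N.
Proof.
apply: (@rank_rinv _ _ _ (mxl 6 3 [:: [:: 0;1;0]; [:: 0;0;1]; [:: 1;0;0]; [::0;0;0];[::0;0;0];[::0;0;0]])).
apply/matrixP => i j; rewrite !mxE !big_ord_recr big_ord0 /= !mxE.
by case: i => [[|[|[|?]]] ?] //; case: j => [[|[|[|?]]] ?] //=; ring.
Qed.

Lemma rank_M2 u v w : u != 0 -> \rank (M2 u v w) = 3%N.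
Proof.
move=> u0.
apply: (@rank_rinv _ _ _ (mxl 6 3 [:: [:: 0;0;(-2*u)^-1]; [:: 0;0;0]; [:: 2^-1;0;w/(-2*u)];
   [::0;0;(-2*u)^-1];[::0;1;0];[::2^-1;0;w/(-2*u)]])).
apply/matrixP => i j; rewrite !mxE !big_ord_recr big_ord0 /= !mxE.
have h2 : (2:R) != 0 by rewrite pnatr_eq0.
by case: i => [[|[|[|?]]] ?] //; case: j => [[|[|[|?]]] ?] //=; field; rewrite ?mulf_neq0 ?oppr_eq0.
Qed.

Definition qu : pe R 2 := PV _ (inord 0).
Definition qw : pe R 2 := PV _ (inord 1).
Definition Pphi (j : 'I_6) : pe R 2 :=
  nth (PC _ 0) [:: PA (PC _ 1) (PM (PC _ (-2)) (PM qu qw));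
                  PM qw (PA (PC _ 1) (PM (PC _ (-1)) (PM qu qw)));
                  qu; PC _ 0; PC _ 0; qu] j.
Definition phi := vev Pphi.

Definition Mphi (u w : R) : 'M[R]_(2,6) := mxl 2 6
  [:: [:: -2*w; -(w^+2); 1; 0; 0; 1];
      [:: -2*u; 1-2*u*w; 0; 0; 0; 0]].

Lemma JphiE y : 'J phi y = Mphi (crd y 0) (crd y 1).
Proof.
apply/matrixP => i j; rewrite vev_J !mxE.
case: i => [[|[|?]] ?] //; case: j => [[|[|[|[|[|[|?]]]]]] ?] //=;
 rewrite /qu /qw /= !mxE ?ordE2 //= /crd; ring.
Qed.

Lemma rank_Mphi u w : u != 0 -> \rank (Mphi u w) = 2%N.
Proof.
move=> u0.
apply: (@rank_rinv _ _ _ (mxl 6 2 [:: [:: 0;(-2*u)^-1]; [:: 0;0]; [:: 1;2*w/(-2*u)];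
   [::0;0];[::0;0];[::0;0]])).
apply/matrixP => i j; rewrite !mxE !big_ord_recr big_ord0 /= !mxE.
have h2 : (2:R) != 0 by rewrite pnatr_eq0.
by case: i => [[|[|?]] ?] //; case: j => [[|[|?]] ?] //=; field; rewrite ?mulf_neq0 ?oppr_eq0.
Qed.

Lemma rank_cap u w : u != 0 -> \rank (M1 :&: M2 u 0 w)%MS = 2%N.
Proof.
move=> u0.
set C : 'M[R]_(4,6) := mxl 4 6 [:: [:: 0;0;1;0;0;1]; [::1;0;0;0;0;0]; [::0;1;0;0;0;0];
   [:: w^+2; w^+3; -w; -(w^+2); 1; w]].
have rC : \rank C = 4%N.
  apply: (@rank_rinv _ _ _ (mxl 6 4 [:: [:: 0;1;0;0]; [:: 0;0;1;0]; [:: 1;0;0;0];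
   [::0;0;0;0];[::w;-(w^+2);-(w^+3);1];[::0;0;0;0]])).
  apply/matrixP => i j; rewrite !mxE !big_ord_recr big_ord0 /= !mxE.
  by case: i => [[|[|[|[|?]]]] ?] //; case: j => [[|[|[|[|?]]]] ?] //=; ring.
have hs : \rank (M1 + M2 u 0 w)%MS = 4%N.
  apply/eqP; rewrite eqn_leq; apply/andP; split.
    rewrite -[X in (_ <= X)%N]rC; apply: mxrankS; rewrite addsmx_sub; apply/andP; split.
      have -> : M1 = mxl 3 4 [:: [:: 1;0;0;0]; [:: 0;1;0;0]; [:: 0;0;1;0]] *m C.
        apply/matrixP => i j; rewrite !mxE !big_ord_recr big_ord0 /= !mxE.
        by case: i => [[|[|[|?]]] ?] //; case: j => [[|[|[|[|[|[|?]]]]]] ?] //=; ring.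
      exact: submxMl.
    have -> : M2 u 0 w = mxl 3 4 [:: [:: 1;-2*w;-(w^+2);0]; [:: 0;0;0;1]; [:: 0;-2*u;1-2*u*w;0]] *m C.
      apply/matrixP => i j; rewrite !mxE !big_ord_recr big_ord0 /= !mxE.
      by case: i => [[|[|[|?]]] ?] //; case: j => [[|[|[|[|[|[|?]]]]]] ?] //=; ring.
    exact: submxMl.
  rewrite -[X in (X <= _)%N]rC; apply: mxrankS.
  have -> : C = (mxl 4 3 [:: [:: 1;0;0]; [:: 0;1;0]; [:: 0;0;1]; [:: 0;0;0]] *m M1 +
                mxl 4 3 [:: [:: 0;0;0]; [:: 0;0;0]; [:: 0;0;0]; [:: 0;1;0]] *m M2 u 0 w)%R.
    apply/matrixP => i j; rewrite !mxE !big_ord_recr !big_ord0 /= !mxE.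
    by case: i => [[|[|[|[|?]]]] ?] //; case: j => [[|[|[|[|[|[|?]]]]]] ?] //=; ring.
  by apply: addmx_sub_adds; exact: submxMl.
have := mxrank_sum_cap M1 (M2 u 0 w).
by rewrite hs rank_M1 rank_M2 //; case: (\rank _) => [|[|[|?]]].
Qed.
End Jac.

Section Qe.
Variable R : realType.
Variable n : nat.
Inductive qe := QC of R | QV of 'I_n | QA of qe & qe | QM of qe & qe | QI of qe.
Fixpoint qev (p : qe) (x : 'rV[R]_n) : R :=
  match p with QC c => c | QV i => x ord0 i | QA p q => qev p x + qev q x
  | QM p q => qev p x * qev q x | QI p => (qev p x)^-1 end.
Fixpoint qok (p : qe) (x : 'rV[R]_n) : Prop :=
  match p with QC _ | QV _ => True | QA p q | QM p q => qok p x /\ qok q x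
  | QI p => qev p x != 0 /\ qok p x end.

Lemma qev_cont p x : qok p x -> {for x, continuous (qev p)}.
Proof.
elim: p => [c|i|p IHp q IHq|p IHp q IHq|p IHp] /=.
- by move=> _; apply: cst_continuous.
- by move=> _; exact: coord_continuous.
- by case=> /IHp hp /IHq hq; exact: (continuousD hp hq).
- by case=> /IHp hp /IHq hq; exact: (continuousM hp hq).
- by case=> h0 /IHp hp; exact: (continuousV h0 hp).
Qed.


Variable m : nat.
Definition vq (Q : 'I_m -> qe) (x : 'rV[R]_n) : 'rV[R]_m := \row_j qev (Q j) x.

Lemma vq_cont Q x : (forall j, qok (Q j) x) -> {for x, continuous (vq Q)}.
Proof.
move=> ok.
have -> : vq Q = \sum_(j < m) (fun x => qev (Q j) x *: (delta_mx 0 j : 'rV[R]_m)).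
  apply: funext => y; rewrite fct_sumE [LHS]row_sum_delta; apply: eq_bigr => j _; by rewrite mxE.
apply: (big_ind (fun f : 'rV[R]_n -> 'rV[R]_m => {for x, continuous f})).
- by apply: cst_continuous.
- by move=> f g hf hg; exact: (continuousD hf hg).
- by move=> j _; apply: continuousZr_tmp; exact: qev_cont.
Qed.
End Qe.

Section Emb.
Variable R : realType.

Lemma embed_of m k (U : set 'rV[R]_m) (P : 'I_k -> pe R m) (Q : 'I_m -> qe R k) :
  open U -> (forall y, U y -> vq Q (vev P y) = y) ->
  (forall y, U y -> forall j, qok (Q j) (vev P y)) ->
  (forall x, U x -> \rank ('J (vev P) x) = m) -> smooth_embedding U (vev P).
Proof.
move=> oU gK gok rk; split => //.
- exact: vev_smooth.
- by move=> x y Ux Uy e; rewrite -(gK x Ux) -(gK y Uy) e.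
- move=> x Ux eps e0.
  have gc := vq_cont (gok x Ux).
  have := (cvgrPdist_lt _ _).1 gc eps e0.
  move=> H; have [d d0 Hd] := (nbhs_normP _ _).1 (H _).
  exists d => // y Uy Hy.
  have := Hd (vev P y); rewrite /= gK // gK // distrC => /(_ Hy).
  by rewrite distrC.
Qed.

Lemma open_crd0 n : open [set x : 'rV[R]_n.+1 | crd x 0 != 0].
Proof.
have -> : [set x : 'rV[R]_n.+1 | crd x 0 != 0] = (fun x : 'rV[R]_n.+1 => x ord0 (inord 0)) @^-1` [set r : R | r != 0] by [].
apply: open_comp; last exact: open_neq.
by move=> x _; exact: coord_continuous.
Qed.
End Emb.

Lemma crdE (R : realType) n (y : 'rV[R]_n.+1) j : y ord0 j = crd y j.
Proof. by rewrite /crd inord_val. Qed.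

Lemma crd_row (R : realType) n (l : seq R) k : (k <= n)%N ->
  crd (\row_(i < n.+1) nth 0 l i) k = nth 0 l k.
Proof. by move=> kn; rewrite /crd mxE inordK. Qed.

Section Embs.
Variable R : realType.

Definition Q1 (j : 'I_3) : qe R 6 := nth (QC _ 0) [:: QV _ (inord 2); QV _ (inord 0); QV _ (inord 1)] j.
Definition Q2 (j : 'I_3) : qe R 6 := nth (QC _ 0)
  [:: QM (QC _ 2^-1) (QA (QV _ (inord 2)) (QV _ (inord 5))); QV _ (inord 4);
      QM (QA (QA (QC _ 1) (QM (QC _ (-1)) (QV _ (inord 0)))) (QM (QC _ (-1)) (QV _ (inord 3))))
         (QI (QA (QV _ (inord 2)) (QV _ (inord 5))))] j.
Definition Qphi (j : 'I_2) : qe R 6 := nth (QC _ 0)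
  [:: QV _ (inord 2);
      QM (QA (QC _ 1) (QM (QC _ (-1)) (QV _ (inord 0)))) (QI (QM (QC _ 2) (QV _ (inord 2))))] j.

Lemma emb1 : smooth_embedding (@U1 R) (@V1 R).
Proof.
rewrite V1E; apply: (embed_of (Q := Q1)).
- exact: open_crd0.
- move=> y _; rewrite -V1E; apply/rowP => j; rewrite mxE [RHS]crdE.
  by case: j => [[|[|[|?]]] ?] //=; rewrite /V1 /row6 /= mxE inordK.
- by move=> y _ [[|[|[|?]]] ?].
- by move=> x _; rewrite -V1E J1E rank_M1.
Qed.

Lemma emb2 : smooth_embedding (@U2 R) (@V2 R).
Proof.
have h2 : (2:R) != 0 by rewrite pnatr_eq0.
rewrite V2E; apply: (embed_of (Q := Q2)).
- exact: open_crd0.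
- move=> y /= u0; rewrite -V2E; apply/rowP => j; rewrite mxE [RHS]crdE.
  case: j => [[|[|[|?]]] ?] //=; rewrite /V2 /row6 /= !mxE !inordK //=; field.
  all: try done. by rewrite (_ : _ + _ = 2 * crd y 0) ?mulf_neq0 //; ring.
- move=> y /= u0 [[|[|[|?]]] ?] //=; rewrite -V2E /V2 /row6 /= !mxE !inordK //=; split => //.
  by rewrite (_ : _ + _ = 2 * crd y 0) ?mulf_neq0 //; ring.
- by move=> x u0; rewrite -V2E J2E rank_M2.
Qed.

Definition Uphi : set 'rV[R]_2 := [set x | crd x 0 != 0].

Lemma embphi : smooth_embedding Uphi (@phi R).
Proof.
have h2 : (2:R) != 0 by rewrite pnatr_eq0.
apply: (embed_of (Q := Qphi)).
- exact: open_crd0.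
- move=> y /= u0; apply/rowP => j; rewrite mxE [RHS]crdE.
  case: j => [[|[|?]] ?] //=; rewrite !mxE /Pphi !inordK //=; rewrite /crd; field.
  by rewrite ?mulf_neq0.
- move=> y /= u0 [[|[|?]] ?] //=; rewrite !mxE /Pphi !inordK //=; split => //.
  by rewrite mulf_neq0.
- by move=> x u0; rewrite JphiE rank_Mphi.
Qed.
End Embs.

Section Ric.
Variable R : realType.
Implicit Type p : 'rV[R]_6.
Definition E1 p := let a := crd p 0 in let b := crd p 1 in let c := crd p 2 in
  let d := crd p 3 in let e := crd p 4 in let f := crd p 5 in
  (a - d + 1) * d + b * (f - c).
Definition E2 p := let a := crd p 0 in let b := crd p 1 in let c := crd p 2 in
  let d := crd p 3 in let e := crd p 4 in let f := crd p 5 in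
  (c * d - b * e + f) + (c * (d - 1) - b * e).
Definition E3 p := let a := crd p 0 in let b := crd p 1 in let c := crd p 2 in
  let d := crd p 3 in let e := crd p 4 in let f := crd p 5 in
  - c ^+ 2 + f * c + (a - d - 1) * e.

Definition i0 : 'I_2 := Ordinal (isT : (0 < 2)%N).
Definition i1 : 'I_2 := Ordinal (isT : (1 < 2)%N).

Lemma ricci_s0 p x1 : x1 != 0 ->
  (ricci_s p x1 = 0 <-> [/\ E1 p = 0, E2 p = 0 & E3 p = 0]).
Proof.
move=> x0.
have hz : forall A B : R, 2^-1 * (x1 ^- 2 * A + x1 ^- 2 * B) = 0 <-> A + B = 0.
  move=> A B; split => h.
    have -> : A + B = (2^-1 * (x1 ^- 2 * A + x1 ^- 2 * B)) * (2 * x1 ^+ 2).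
      by field.
    by rewrite h mul0r.
  by rewrite -mulrDr h !mulr0.
split.
- move/matrixP => H.
  have h00 := H i0 i0; have h01 := H i0 i1; have h11 := H i1 i1.
  rewrite !mxE /= in h00 h01 h11.
  move: h00 h01 h11 => /hz h00 /hz h01 /hz h11.
  rewrite /E1 /E2 /E3; split; lra.
- case=> e1 e2 e3; apply/matrixP => i j; rewrite !mxE.
  case: i => [[|[|?]] ?] //; case: j => [[|[|?]] ?] //=; apply/hz;
  move: e1 e2 e3; rewrite /E1 /E2 /E3 /=; lra.
Qed.

Lemma ricci_a0 p x1 : x1 != 0 -> (ricci_a p x1 = 0 <-> crd p 2 + crd p 5 = 0).
Proof.
move=> x0.
have hz : forall A B : R, 2^-1 * (x1 ^- 2 * A - x1 ^- 2 * B) = 0 <-> A - B = 0.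
  move=> A B; split => h.
    have -> : A - B = (2^-1 * (x1 ^- 2 * A - x1 ^- 2 * B)) * (2 * x1 ^+ 2).
      by field.
    by rewrite h mul0r.
  by rewrite -mulrBr h !mulr0.
split.
- move/matrixP => H.
  have h01 := H i0 i1.
  rewrite !mxE /= in h01.
  move: h01 => /hz h01; lra.
- move=> e; apply/matrixP => i j; rewrite !mxE.
  case: i => [[|[|?]] ?] //; case: j => [[|[|?]] ?] //=; apply/hz;
  move: e; lra.
Qed.

Lemma BaE p : Ba p <-> [/\ E1 p = 0, E2 p = 0, E3 p = 0 & crd p 2 + crd p 5 != 0].
Proof.
split.
- case=> hs [x1 [x0 ha]].
  have [] := (ricci_s0 p (oner_neq0 R)).1 (hs 1 ltr01) => e1 e2 e3; split => //.
  apply/eqP => /(ricci_a0 p (lt0r_neq0 x0)).2 h; by rewrite h eqxx in ha.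
- case=> e1 e2 e3 cf; split.
    by move=> x1 x0; apply/(ricci_s0 p (lt0r_neq0 x0)).
  exists 1; split; first exact: ltr01.
  by apply/eqP => /(ricci_a0 p (oner_neq0 R)).1; apply/eqP.
Qed.
End Ric.

Ltac fs := field; rewrite ?mulf_neq0 ?invr_neq0 ?oppr_eq0 ?pnatr_eq0 //.

Section Main.
Variable R : realType.

Definition row3 (l : seq R) : 'rV[R]_3 := \row_(i < 3) nth 0 l i.

Lemma crdV1 x k : (k <= 5)%N -> crd (@V1 R x) k = nth 0 [:: crd x 1; crd x 2; crd x 0; 0; 0; crd x 0] k.
Proof. by move=> k5; rewrite /V1 /row6 crd_row. Qed.

Lemma crdV2 y k : (k <= 5)%N -> crd (@V2 R y) k =
  let u := crd y 0 in let v := crd y 1 in let w := crd y 2 in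
  nth 0 [:: 1 - 2 * u * w + v * w ^+ 2; w * (1 - u * w + v * w ^+ 2);
           u - v * w; - (v * w ^+ 2); v; u + v * w] k.
Proof. by move=> k5; rewrite /V2 /row6 crd_row. Qed.

Lemma rowcrd (p q : 'rV[R]_6) : (forall k, (k <= 5)%N -> crd p k = crd q k) -> p = q.
Proof. by move=> h; apply/rowP => j; rewrite !crdE h // -ltnS. Qed.

Lemma BaD : @Ba R = @D1 R `|` @D2 R.
Proof.
have h2 : (2:R) != 0 by rewrite pnatr_eq0.
apply/seteqP; split => p.
- move/BaE => [].
  rewrite /E1 /E2 /E3 /=.
  set a := crd p 0; set b := crd p 1; set c := crd p 2; set d := crd p 3;
  set e := crd p 4; set f := crd p 5 => e1 e2 e3 cf.
  have [e0|e0] := eqVneq e 0.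
  + left.
    have c0 : c != 0.
      apply/eqP => c0; move: cf e2; rewrite c0 e0; move=> /eqP cf e2; apply: cf. lra.
    have fc : f = c.
      apply/eqP; rewrite -subr_eq0; apply/eqP; apply: (mulfI c0); rewrite mulr0.
      move: e3; rewrite e0; lra.
    have d0 : d = 0.
      have : c * (2 * d) = 0 by move: e2; rewrite e0 fc; lra.
      by move/eqP; rewrite mulf_eq0 (negbTE c0) mulf_eq0 (negbTE h2) => /eqP.
    exists (row3 [:: c; a; b]); first by rewrite /U1 /= /row3 crd_row.
    apply: rowcrd => k k5; rewrite crdV1 // /row3 !crd_row //.
    by case: k k5 => [|[|[|[|[|[|?]]]]]] //=.
  + right.
    have hE : 4 * e * d + (f - c) ^+ 2 = 0.
      have -> : 4 * e * d + (f - c) ^+ 2 =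
        2 * e * ((a - d + 1) * d + b * (f - c))
        - 2 * d * (- c ^+ 2 + f * c + (a - d - 1) * e)
        + (f - c) * ((c * d - b * e + f) + (c * (d - 1) - b * e)) by ring.
      by rewrite e1 e2 e3; ring.
    have hd : d = - (f - c) ^+ 2 / (4 * e).
      apply/eqP; rewrite -subr_eq0; apply/eqP.
      have -> : d - - (f - c) ^+ 2 / (4 * e) = (4 * e * d + (f - c) ^+ 2) / (4 * e).
        fs.
      by rewrite hE mul0r.
    have ha : a = 1 + d - c * (f - c) / e.
      apply/eqP; rewrite -subr_eq0; apply/eqP.
      have -> : a - (1 + d - c * (f - c) / e) = (- c ^+ 2 + f * c + (a - d - 1) * e) / e.
        fs.
      by rewrite e3 mul0r.
    have hb : b = (2 * c * d + f - c) / (2 * e).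
      apply/eqP; rewrite -subr_eq0; apply/eqP.
      have -> : b - (2 * c * d + f - c) / (2 * e) =
         - ((c * d - b * e + f) + (c * (d - 1) - b * e)) / (2 * e).
        fs.
      by rewrite e2 oppr0 mul0r.
    exists (row3 [:: (c + f) / 2; e; (f - c) / (2 * e)]).
      by rewrite /U2 /= /row3 crd_row //= mulf_neq0 // invr_neq0.
    apply: rowcrd => k k5; rewrite crdV2 // /row3 !crd_row //.
    case: k k5 => [|[|[|[|[|[|?]]]]]] //= _.
    * rewrite -/a ha hd; fs.
    * rewrite -/b hb hd; fs.
    * rewrite -/c; fs.
    * rewrite -/d hd; fs.
    * rewrite -/f; fs.
- case=> [[x r0 <-]|[y u0 <-]]; apply/BaE; rewrite /E1 /E2 /E3 /=.
  + rewrite !crdV1 //=; split; try ring.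
    by rewrite (_ : _ + _ = 2 * crd x 0) ?mulf_neq0 //; ring.
  + rewrite !crdV2 //=; split; try ring.
    by rewrite (_ : _ + _ = 2 * crd y 0) ?mulf_neq0 //; ring.
Qed.
End Main.

Section Final.
Variable R : realType.

Lemma crdphi (z : 'rV[R]_2) k : (k <= 5)%N -> crd (@phi R z) k =
  nth 0 [:: 1 - 2 * crd z 0 * crd z 1; crd z 1 * (1 - crd z 0 * crd z 1);
            crd z 0; 0; 0; crd z 0] k.
Proof.
move=> k5; rewrite /crd /phi mxE.
case: k k5 => [|[|[|[|[|[|?]]]]]] //= _; rewrite /Pphi inordK //= /qu /qw; ring.
Qed.

Lemma D12 : @phi R @` (@Uphi R) = (@D1 R `&` @D2 R) `&` setT.
Proof.
rewrite setIT; apply/seteqP; split => p.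
- case=> z u0 <-; split.
  + exists (row3 [:: crd z 0; 1 - 2 * crd z 0 * crd z 1; crd z 1 * (1 - crd z 0 * crd z 1)]).
      by rewrite /U1 /= /row3 crd_row.
    apply: rowcrd => k k5; rewrite crdV1 // crdphi // /row3 !crd_row //.
  + exists (row3 [:: crd z 0; 0; crd z 1]).
      by rewrite /U2 /= /row3 crd_row.
    apply: rowcrd => k k5; rewrite crdV2 // crdphi // /row3 !crd_row //.
    by case: k k5 => [|[|[|[|[|[|?]]]]]] //= _; ring.
- case=> [[x _ ex] [y u0 ey]].
  have v0 : crd y 1 = 0.
    by have := congr1 (fun q => crd q 4) (etrans ex (esym ey)); rewrite /= crdV1 // crdV2.
  exists (\row_(i < 2) nth 0 [:: crd y 0; crd y 2] i); first by rewrite /Uphi /= crd_row.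
  rewrite -ey; apply: rowcrd => k k5; rewrite crdV2 // crdphi // !crd_row // v0.
  by case: k k5 => [|[|[|[|[|[|?]]]]]] //= _; ring.
Qed.

End Final.

Theorem theorem1p7 (R : realType) :
  @Ba R = @D1 R `|` @D2 R /\
  smooth_embedding (@U1 R) (@V1 R) /\
  smooth_embedding (@U2 R) (@V2 R) /\
  @submanifold R 3 6 (@D1 R) /\ @submanifold R 3 6 (@D2 R) /\
  @submanifold R 2 6 (@D1 R `&` @D2 R) /\
      (forall x y, @U1 R x -> @U2 R y -> V1 x = V2 y ->
         \rank ('J (@V1 R) x :&: 'J (@V2 R) y)%MS = 2%N).
Proof.
split; first exact: BaD.
split; first exact: emb1.
split; first exact: emb2.
split.
  move=> p _; exists (@U1 R), (@V1 R), setT; split => //; [exact: emb1|exact: openT|by rewrite setIT].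
split.
  move=> p _; exists (@U2 R), (@V2 R), setT; split => //; [exact: emb2|exact: openT|by rewrite setIT].
split.
  move=> p _; exists (@Uphi R), (@phi R), setT; split => //; [exact: embphi|exact: openT|exact: D12].
move=> x y _ u0 e.
have v0 : crd y 1 = 0.
  by have := congr1 (fun q => crd q 4) e; rewrite /= crdV1 // crdV2.
by rewrite J1E J2E v0 rank_cap.
Qed.
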